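(* For every command $C$, every store $\sigma$ and every expectation $f$: (1) $\mathsf{ec}[C](\sigma)\le\mathsf{ect}[C](\mathbf{0})(\sigma)$; (2) $\mathsf{ev}[C](\sigma)(f)\le\mathsf{evt}[C](f)(\sigma)$.
   Context: Let $\mathrm{Var}$ be a finite set of integer-valued variables and $\Sigma = \mathrm{Var}\to\mathbb{Z}$ the set of stores; $\sigma[x\mapsto i]$ is the store updated at $x$. Boolean expressions $\varphi$ are evaluated on stores ($\sigma\models\varphi$). A distribution expression $d$ assigns to each store $\sigma$ a probability distribution $d(\sigma)$ on $\mathbb{Z}$. Commands: $C,D ::= \mathtt{skip} \mid \mathtt{tick}(r) \mid \mathtt{halt} \mid x :\approx d \mid \mathtt{if}_{[\psi]}(\varphi)\{C\}\{D\} \mid \mathtt{while}_{[\psi]}(\varphi)\{C\} \mid C \,\square\, D \mid C \oplus_p D \mid C;D$, with $r$ a nonnegative rational, $p\in[0,1]$. Expectations are functions $f:\Sigma\to[0,\infty]$, with pointwise operations, $\mathbf{r}$ the constant $r$ (so $\mathbf{0}$ is the zero function), $[\varphi](\sigma)\in\{0,1\}$ the indicator, $[c]=1$ if $c=\mathit{true}$ and $0$ otherwise, $0\cdot\infty=0$. Transformer $\mathsf{et}_c$ for $c\in\{\mathit{true},\mathit{false}\}$: $\mathsf{et}_c[\mathtt{skip}](f)=f$; $\mathsf{et}_c[\mathtt{tick}(r)](f)=[c]\cdot\mathbf{r}+f$; $\mathsf{et}_c[\mathtt{halt}](f)=\mathbf{0}$; $\mathsf{et}_c[x:\approx d](f)=\lambda\sigma.\sum_{i}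 d(\sigma)(i)\, f(\sigma[x\mapsto i])$; $\mathsf{et}_c[\mathtt{if}_{[\psi]}(\varphi)\{C\}\{D\}](f)=[\psi\wedge\varphi]\cdot\mathsf{et}_c[C](f)+[\psi\wedge\neg\varphi]\cdot\mathsf{et}_c[D](f)$; $\mathsf{et}_c[\mathtt{while}_{[\psi]}(\varphi)\{C\}](f)=\mathrm{lfp}\,F.\ [\psi\wedge\varphi]\cdot\mathsf{et}_c[C](F)+[\psi\wedge\neg\varphi]\cdot f$ (least fixed point, pointwise order); $\mathsf{et}_c[C\,\square\,D](f)=\max(\mathsf{et}_c[C](f),\mathsf{et}_c[D](f))$; $\mathsf{et}_c[C\oplus_p D](f)=\mathbf{p}\cdot\mathsf{et}_c[C](f)+\mathbf{(1-p)}\cdot\mathsf{et}_c[D](f)$; $\mathsf{et}_c[C;D](f)=\mathsf{et}_c[C](\mathsf{et}_c[D](f))$. Set $\mathsf{ect}[C]=\mathsf{et}_{\mathit{true}}[C]$ and $\mathsf{evt}[C]=\mathsf{et}_{\mathit{false}}[C]$. Configurations: $\mathrm{Conf}=(\mathrm{Cmd}\times\Sigma)\cup\Sigma\cup\{\bot\}$; an active configuration is written $\langle C,\sigma\rangle$. A multidistribution on a set $A$ is a countable multiset $\mu$ of pairs $q:a$ with $a\in A$, $0<q\le1$, and $\sum_{q:a\in\mu}q\le1$; $\mathbb{E}_\mu(g)=\sum_{q:a\in\mu}q\cdot g(a)$ (with multiplicity); the restriction $\mu|_P$ to $P\subseteq A$ keeps exactly the entries $q:a$ with $a\in P$. For $0<p\le1$,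 $p\cdot\{q_i:a_i\}_i=\{p q_i:a_i\}_i$, and for a countable family with $p_i>0$, $\sum_ip_i\le1$, $\biguplus_i p_i\cdot\mu_i$ is the multiset union of the $p_i\cdot\mu_i$. For $h:A\to B$, $\overline h(\{q_i:a_i\}_i)=\{q_i:h(a_i)\}_i$. A configuration $\gamma$ is identified with $\{1:\gamma\}$; entries with probability $0$ are omitted. The one-step relation $\gamma\to_w\mu$ is the least relation closed under: $\langle\mathtt{skip},\sigma\rangle\to_0\sigma$; $\langle\mathtt{tick}(r),\sigma\rangle\to_r\sigma$; $\langle\mathtt{halt},\sigma\rangle\to_0\bot$; $\langle x:\approx d,\sigma\rangle\to_0\{d(\sigma)(i):\sigma[x\mapsto i]\mid d(\sigma)(i)>0\}$; $\langle\mathtt{if}_{[\psi]}(\varphi)\{C\}\{D\},\sigma\rangle\to_0\langle C,\sigma\rangle$ if $\sigma\models\psi\wedge\varphi$, $\to_0\langle D,\sigma\rangle$ if $\sigma\models\psi\wedge\neg\varphi$, $\to_0\bot$ if $\sigma\models\neg\psi$; $\langle\mathtt{while}_{[\psi]}(\varphi)\{C\},\sigma\rangle\to_0\langle C;\mathtt{while}_{[\psi]}(\varphi)\{C\},\sigma\rangle$ if $\sigma\models\psi\wedge\varphi$, $\to_0\sigma$ if $\sigma\models\psi\wedge\neg\varphi$, $\to_0\bot$ if $\sigma\models\neg\psi$; $\langle C\,\square\,D,\sigma\rangle\to_0\langle C,\sigma\rangle$ and $\to_0\langle D,\sigma\rangle$; $\langle C\oplus_pD,\sigma\rangle\to_0\{p:\langle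 C,\sigma\rangle,1-p:\langle D,\sigma\rangle\}$; if $\langle C,\sigma\rangle\to_r\mu$ then $\langle C;D,\sigma\rangle\to_r\overline{\kappa_D}(\mu)$, where $\kappa_D(\langle C',\sigma'\rangle)=\langle C';D,\sigma'\rangle$, $\kappa_D(\sigma')=\langle D,\sigma'\rangle$, $\kappa_D(\bot)=\bot$. The lifted relation $\mu\Rightarrow_w\nu$ on multidistributions is the least relation with: $\mu\Rightarrow_0\mu$; $\{1:\gamma\}\Rightarrow_w\mu$ whenever $\gamma\to_w\mu$; and if $\mu_i\Rightarrow_{w_i}\nu_i$ for all $i$ in a countable index set $I$, $p_i>0$, $\sum_ip_i\le1$, then $\biguplus_ip_i\cdot\mu_i\Rightarrow_{w}\biguplus_ip_i\cdot\nu_i$ with $w=\sum_ip_iw_i$. The multi-step relation $\Rightarrow^w$ is the least relation with: $\mu\Rightarrow^0\mu$; $\mu\Rightarrow^w\nu$ whenever $\mu\Rightarrow_w\nu$; and $\mu\Rightarrow^{w_1+w_2}\nu$ whenever $\mu\Rightarrow^{w_1}\mu'$ and $\mu'\Rightarrow^{w_2}\nu$. The expected cost function is $\mathsf{ec}[C](\sigma)=\sup\{w\mid \{1:\langle C,\sigma\rangle\}\Rightarrow^w\mu\text{ for some }\mu\}$ and the expected value function is $\mathsf{ev}[C](\sigma)(f)=\sup\{\mathbb{E}_{\mu|_\Sigma}(f)\mid \{1:\langle C,\sigma\rangle\}\Rightarrow^w\mu\text{ for some }w,\mu\}$. *)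

(* Defs.v *)
From HB Require Import structures.
From mathcomp Require Import all_boot all_order all_algebra.
From mathcomp Require Import all_classical all_reals all_analysis.
Set Implicit Arguments. Unset Strict Implicit. Unset Printing Implicit Defensive.
Import Order.TTheory GRing.Theory Num.Theory.
Local Open Scope classical_set_scope.
Local Open Scope ring_scope.

Section Semantics.
Context {R : realType} {Var : finType}.

Definition store := Var -> int.
Definition upd (s : store) (x : Var) (i : int) : store :=
  fun y => if y == x then i else s y.
Definition bexp := store -> bool.

Record distr := Distr {
  pmf :> int -> R;
  pmf_ge0 : forall i, 0 <= pmf i;
  pmf_sum1 : (\esum_(i in [set: int]) (pmf i)%:E = 1)%E }.
Definition dexp := store -> distr.

Inductive cmd :=
| Skip
| Tick (r : rat) (hr : 0 <= r)
| Halt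
| Assign (x : Var) (d : dexp)
| Ite (psi phi : bexp) (C D : cmd)
| While (psi phi : bexp) (C : cmd)
| NDet (C D : cmd)
| Prob (p : R) (hp : 0 <= p <= 1) (C D : cmd)
| Seq (C D : cmd).

(* Expectations: functions Sigma -> [0, +oo], represented in \bar R. *)
Definition expect := store -> \bar R.

Local Open Scope ereal_scope.

Definition ind (b : bool) : \bar R := if b then 1 else 0.

(* Least fixed point in the complete lattice of [0,+oo]-valued functions
   ordered pointwise (Knaster-Tarski: meet of all pre-fixed points). *)
Definition lfp (Phi : expect -> expect) : expect :=
  fun s => ereal_inf [set F s | F in
     [set F : expect | (forall t, 0 <= F t) /\ (forall t, Phi F t <= F t)]].

Fixpoint et (c : bool) (C : cmd) (f : expect) {struct C} : expect :=
  match C with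
  | Skip => f
  | Tick r _ => fun s => ind c * (ratr r)%:E + f s
  | Halt => fun _ => 0
  | Assign x d => fun s =>
      \esum_(i in [set: int]) ((d s i)%:E * f (upd s x i))
  | Ite psi phi C1 C2 => fun s =>
      ind (psi s && phi s) * et c C1 f s + ind (psi s && ~~ phi s) * et c C2 f s
  | While psi phi C1 =>
      lfp (fun F s => ind (psi s && phi s) * et c C1 F s
                      + ind (psi s && ~~ phi s) * f s)
  | NDet C1 C2 => fun s => maxe (et c C1 f s) (et c C2 f s)
  | Prob p _ C1 C2 => fun s => p%:E * et c C1 f s + (1 - p)%R%:E * et c C2 f s
  | Seq C1 C2 => et c C1 (et c C2 f)
  end.

Definition ect := et true.
Definition evt := et false.

Inductive conf :=
| Active (C : cmd) (s : store)
| Term (s : store)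
| Bot.

HB.instance Definition _ := gen_eqMixin conf.
HB.instance Definition _ := gen_choiceMixin conf.

(* Countable multisets of pairs q:a, encoded by their multiplicity function:
   mu q a = number of copies of the entry q:a. *)
Definition mdist (A : Type) := R -> A -> nat.

Definition mempty {A} : mdist A := fun _ _ => 0%N.
Definition mdirac {A} (a : A) : mdist A :=
  fun q b => if `[< q = 1%R /\ b = a >] then 1%N else 0%N.
(* p . mu ; entries with probability 0 are omitted (p = 0 gives the empty multiset) *)
Definition mscale {A} (p : R) (mu : mdist A) : mdist A :=
  fun q b => if p == 0%R then 0%N else mu (q / p)%R b.
Definition madd {A} (mu nu : mdist A) : mdist A := fun q b => (mu q b + nu q b)%N.

Definition is_union {A} (p : nat -> R) (mus : nat -> mdist A) (nu : mdist A) :=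
  forall q b, ((nu q b)%:R : R)%:E = \sum_(i <oo) (((mscale (p i) (mus i)) q b)%:R : R)%:E.

Definition is_image {A B : choiceType} (h : A -> B) (mu : mdist A) (nu : mdist B) :=
  forall q b, ((nu q b)%:R : R)%:E = \esum_(a in [set a | h a = b]) ((mu q a)%:R : R)%:E.

Definition Expect {A : choiceType} (mu : mdist A) (g : A -> \bar R) : \bar R :=
  \esum_(x in [set: R * A]) ((((mu x.1 x.2)%:R * x.1)%R)%:E * g x.2).

Definition restrictS (mu : mdist conf) : mdist store := fun q s => mu q (Term s).

Definition kappa (D : cmd) (g : conf) : conf :=
  match g with
  | Active C' s => Active (Seq C' D) s
  | Term s => Active D s
  | Bot => Bot
  end.

Definition assign_md (x : Var) (d : dexp) (s : store) : mdist conf :=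
  fun q a => if `[< exists i, (0 < d s i)%R /\ q = d s i /\ a = Term (upd s x i) >]
             then 1%N else 0%N.

Inductive step : conf -> \bar R -> mdist conf -> Prop :=
| st_skip s : step (Active Skip s) 0 (mdirac (Term s))
| st_tick r hr s : step (Active (@Tick r hr) s) (ratr r)%:E (mdirac (Term s))
| st_halt s : step (Active Halt s) 0 (mdirac Bot)
| st_assign x d s : step (Active (Assign x d) s) 0 (assign_md x d s)
| st_if_t psi phi C D s : psi s && phi s ->
    step (Active (Ite psi phi C D) s) 0 (mdirac (Active C s))
| st_if_f psi phi C D s : psi s && ~~ phi s ->
    step (Active (Ite psi phi C D) s) 0 (mdirac (Active D s))
| st_if_bot psi phi C D s : ~~ psi s ->
    step (Active (Ite psi phi C D) s) 0 (mdirac Bot)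
| st_while_t psi phi C s : psi s && phi s ->
    step (Active (While psi phi C) s) 0 (mdirac (Active (Seq C (While psi phi C)) s))
| st_while_f psi phi C s : psi s && ~~ phi s ->
    step (Active (While psi phi C) s) 0 (mdirac (Term s))
| st_while_bot psi phi C s : ~~ psi s ->
    step (Active (While psi phi C) s) 0 (mdirac Bot)
| st_ndet_l C D s : step (Active (NDet C D) s) 0 (mdirac (Active C s))
| st_ndet_r C D s : step (Active (NDet C D) s) 0 (mdirac (Active D s))
| st_prob p hp C D s : step (Active (@Prob p hp C D) s) 0
    (madd (mscale p (mdirac (Active C s))) (mscale (1 - p)%R (mdirac (Active D s))))
| st_seq C D s w mu nu : step (Active C s) w mu -> is_image (kappa D) mu nu ->
    step (Active (Seq C D) s) w nu.

(* Lifted relation.  Countable index sets are represented by nat with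
   weights p_i >= 0: indices with p_i = 0 contribute nothing. *)
Inductive lstep : mdist conf -> \bar R -> mdist conf -> Prop :=
| ls_refl mu : lstep mu 0 mu
| ls_single g w mu : step g w mu -> lstep (mdirac g) w mu
| ls_union (p : nat -> R) (mus nus : nat -> mdist conf) (ws : nat -> \bar R)
    (mu nu : mdist conf) :
    (forall i, (0 <= p i)%R) ->
    \sum_(i <oo) (p i)%:E <= 1 ->
    (forall i, lstep (mus i) (ws i) (nus i)) ->
    is_union p mus mu -> is_union p nus nu ->
    lstep mu (\sum_(i <oo) ((p i)%:E * ws i)) nu.

Inductive msteps : mdist conf -> \bar R -> mdist conf -> Prop :=
| ms_refl mu : msteps mu 0 mu
| ms_one mu w nu : lstep mu w nu -> msteps mu w nu
| ms_trans mu w1 mu' w2 nu : msteps mu w1 mu' -> msteps mu' w2 nu ->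
    msteps mu (w1 + w2) nu.

Definition ec (C : cmd) (s : store) : \bar R :=
  ereal_sup [set w | exists mu, msteps (mdirac (Active C s)) w mu].

Definition ev (C : cmd) (s : store) (f : expect) : \bar R :=
  ereal_sup [set Expect (restrictS mu) f | mu in
               [set mu | exists w, msteps (mdirac (Active C s)) w mu]].

End Semantics.

(* Main.v *)
Require Import Defs.
From HB Require Import structures.
From mathcomp Require Import all_boot all_order all_algebra.
From mathcomp Require Import all_classical all_reals all_analysis.
Import Order.TTheory GRing.Theory Num.Theory.
Local Open Scope classical_set_scope.
Local Open Scope ring_scope.
Local Open Scope ereal_scope.

Section Aux.
Context {R : realType}.

Lemma esumZl (T : choiceType) (S : set T) (a : T -> \bar R) (r : R) :
  (0 <= r)%R -> (forall x, 0 <= a x) ->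
  \esum_(x in S) (r%:E * a x) = r%:E * \esum_(x in S) a x.
Proof.
move=> r0 a0; rewrite /esum -ereal_supZl //; last first.
  apply/set0P; exists 0; exists set0; first exact: fsets_set0.
  by rewrite fsbig_set0.
congr ereal_sup; apply/seteqP; split => y/=.
- move=> [X XS <-]; exists (\sum_(x \in X) a x); first by exists X.
  by rewrite ge0_mule_fsumr.
- by move=> [_ [X XS <-] <-]; exists X => //; rewrite ge0_mule_fsumr.
Qed.

Lemma esum_ge1 (T : choiceType) (S : set T) (a : T -> \bar R) x :
  (forall x, 0 <= a x) -> S x -> a x <= \esum_(i in S) a i.
Proof.
move=> a0 Sx; apply: esum_ge; exists [set x]%classic.
  by split; [exact: finite_set1| move=> y ->].
by rewrite fsbig_set1.
Qed.

Lemma esumZr_ext (T : choiceType) (S : set T) (a : T -> \bar R) (K : \bar R) :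
  (forall x, 0 <= a x) -> 0 <= K ->
  (\esum_(x in S) a x) * K = \esum_(x in S) (a x * K).
Proof.
move=> a0; case: K => [r|_|//].
  rewrite lee_fin => r0; rewrite muleC -esumZl //; apply: eq_esum => x _; exact: muleC.
have [allz|] := pselect (forall x, S x -> a x = 0).
  rewrite esum1 // mul0e esum1 // => x Sx; by rewrite allz // mul0e.
move=> /existsNP [x] /not_implyP [Sx] /eqP ax0.
have ax : 0 < a x by rewrite lt_def ax0 a0.
have -> : (\esum_(i in S) a i) * +oo = +oo.
  by rewrite muleC gt0_mulye // (lt_le_trans ax) // esum_ge1.
apply/eqP; rewrite eq_le leey /=.
have := @esum_ge1 _ S (fun i => a i * +oo) x (fun y => mule_ge0 (a0 y) (leey _)) Sx.
by rewrite /= muleC gt0_mulye // => ->.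
Qed.

Lemma nneseriesZr_ext (a : nat -> \bar R) (K : \bar R) :
  (forall x, 0 <= a x) -> 0 <= K ->
  (\sum_(i <oo) a i) * K = \sum_(i <oo) (a i * K).
Proof.
move=> a0 K0; rewrite !nneseries_esumT //; first exact: esumZr_ext.
by move=> n; rewrite mule_ge0.
Qed.

Lemma esum_swap (T1 T2 : choiceType) (a : T1 -> T2 -> \bar R) :
  (forall i j, 0 <= a i j) ->
  \esum_(i in [set: T1]) \esum_(j in [set: T2]) a i j =
  \esum_(j in [set: T2]) \esum_(i in [set: T1]) a i j.
Proof.
move=> a0; rewrite !esum_esum//.
rewrite (reindex_esum ([set: T2] `*`` (fun=> [set: T1])) _ (fun x => (x.2, x.1)))//.
split=> //=.
- by move=> [i1 i2] [j1 j2] /= _ _ [] -> ->.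
- by move=> [i1 i2] _ /=; exists (i2, i1).
Qed.

Lemma esum_subset (T : choiceType) (A B : set T) (a : T -> \bar R) :
  (forall x, 0 <= a x) -> A `<=` B ->
  \esum_(x in A) a x <= \esum_(x in B) a x.
Proof.
move=> a0 AB; rewrite (esum_mkcond A) (esum_mkcond B); apply: le_esum => x _.
case: ifPn => xA; first by rewrite ifT // inE; apply: AB; rewrite -inE.
by case: ifP.
Qed.

Lemma esum_supp (T : choiceType) (A : set T) (a : T -> \bar R) :
  (forall x, ~ A x -> a x = 0) ->
  \esum_(x in [set: T]) a x = \esum_(x in A) a x.
Proof.
move=> h; rewrite (esum_mkcond A); apply: eq_esum => x _.
by case: ifPn => // /negP; rewrite inE => /h.
Qed.

End Aux.

Section PsiSec.
Context {R : realType}.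

Definition posp (q : R) : R := if (0 < q)%R then q else 0%R.
Lemma pos_ge0 q : (0 <= posp q)%R.
Proof. by rewrite /posp; case: ifP => // /ltW. Qed.
Lemma le_pos q : (q <= posp q)%R.
Proof. by rewrite /posp; case: ifP => // /negbT; rewrite -leNgt. Qed.
Lemma pos_gt0 q : (0 < q)%R -> posp q = q.
Proof. by rewrite /posp => ->. Qed.
Lemma posM p q : (0 < p)%R -> posp (p * q) = (p * posp q)%R.
Proof. by move=> pp; rewrite /posp pmulr_rgt0 //; case: ifP => //; rewrite mulr0. Qed.

Definition Psi {A : choiceType} (mu : @Defs.mdist R A) (g : A -> \bar R) : \bar R :=
  \esum_(x in [set: R * A]) (((mu x.1 x.2)%:R * posp x.1)%R%:E * g x.2).

Lemma Psi_term_ge0 (n : nat) q (y : \bar R) : 0 <= y -> 0 <= ((n%:R * posp q)%R%:E * y).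
Proof. by move=> y0; rewrite mule_ge0 // lee_fin mulr_ge0 // pos_ge0. Qed.

Lemma Psi_ge0 (A : choiceType) (mu : @Defs.mdist R A) (g : A -> \bar R) : (forall a, 0 <= g a) -> 0 <= Psi mu g.
Proof. by move=> g0; apply: esum_ge0 => x _; apply: Psi_term_ge0. Qed.

Lemma Psi_dirac (A : choiceType) (a : A) (g : A -> \bar R) : 0 <= g a -> Psi (mdirac a) g = g a.
Proof.
move=> ga; rewrite /Psi (@esum_supp _ _ [set (1%R, a)]); last first.
  move=> [q b] /= h; rewrite /mdirac asboolF ?mul0r ?mul0e //.
  by move=> [q1 ba]; apply: h; rewrite q1 ba.
rewrite esum_set1 /=; last by rewrite Psi_term_ge0.
by rewrite /mdirac asboolT // mul1r pos_gt0 ?ltr01 // mul1e.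
Qed.

Lemma Psi_scale (A : choiceType) (mu : @Defs.mdist R A) (p : R) (g : A -> \bar R) : (0 <= p)%R -> (forall a, 0 <= g a) ->
  Psi (Defs.mscale p mu) g = p%:E * Psi mu g.
Proof.
move=> p0 g0; have [->|pn0] := eqVneq p 0%R.
  by rewrite mul0e /Psi esum1 // => x _; rewrite /Defs.mscale eqxx mul0r mul0e.
have pp : (0 < p)%R by rewrite lt_def pn0 p0.
rewrite /Psi (reindex_esum [set: R * A] [set: R * A] (fun x => (p * x.1, x.2)%R)); last first.
  split=> //=.
  - by move=> [q1 b1] [q2 b2] _ _ /= [/(mulfI pn0) -> ->].
  - by move=> [q b] _; exists ((q / p)%R, b) => //=; rewrite mulrC divfK.
rewrite -esumZl //; last by move=> x; apply: Psi_term_ge0.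
apply: eq_esum => [[q b]] _ /=.
rewrite /Defs.mscale (negbTE pn0) [(p * q / p)%R]mulrC mulKf // posM // mulrCA EFinM muleA //.
Qed.

Lemma Psi_add (A : choiceType) (mu nu : @Defs.mdist R A) (g : A -> \bar R) : (forall a, 0 <= g a) ->
  Psi (madd mu nu) g = Psi mu g + Psi nu g.
Proof.
move=> g0; rewrite /Psi -esumD; last 2 first.
- by move=> x _; apply: Psi_term_ge0.
- by move=> x _; apply: Psi_term_ge0.
apply: eq_esum => [[q b]] _ /=.
by rewrite /madd natrD mulrDl EFinD ge0_muleDl // lee_fin mulr_ge0 // pos_ge0.
Qed.

Lemma Psi_union (A : choiceType) (p : nat -> R) (mus : nat -> @Defs.mdist R A) (nu : @Defs.mdist R A) (g : A -> \bar R) :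
  (forall i, 0 <= p i)%R -> (forall a, 0 <= g a) -> is_union p mus nu ->
  Psi nu g = \sum_(i <oo) ((p i)%:E * Psi (mus i) g).
Proof.
move=> p0 g0 hu.
transitivity (\sum_(i <oo) Psi (Defs.mscale (p i) (mus i)) g); last first.
  by apply: eq_eseriesr => i _; rewrite Psi_scale.
rewrite /Psi.
rewrite (eq_esum (b := fun x => \esum_(i in [set: nat])
   ((((Defs.mscale (p i) (mus i)) x.1 x.2)%:R : R)%:E * ((posp x.1)%:E * g x.2)))); last first.
  move=> [q b] _ /=; rewrite EFinM -muleA hu nneseriesZr_ext ?nneseries_esumT //.
  all: try move=> ?; repeat apply: mule_ge0; rewrite ?lee_fin ?pos_ge0 //.
rewrite esum_swap; last first.
  by move=> i j; rewrite mule_ge0 // ?lee_fin // mule_ge0 // lee_fin pos_ge0.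
rewrite nneseries_esumT; last by move=> n; apply: esum_ge0 => x _; apply: Psi_term_ge0.
by apply: eq_esum => i _; apply: eq_esum => [[q b]] _ /=; rewrite EFinM muleA.
Qed.

Lemma Psi_image (A B : choiceType) (h : A -> B) (mu : @Defs.mdist R A) (nu : @Defs.mdist R B) (g : B -> \bar R) :
  (forall b, 0 <= g b) -> is_image h mu nu -> Psi nu g = Psi mu (g \o h).
Proof.
move=> g0 hi; rewrite /Psi.
rewrite (eq_esum (b := fun x => \esum_(a in [set a | h a = x.2])
     (((mu x.1 a)%:R : R)%:E * ((posp x.1)%:E * g x.2)))); last first.
  move=> [q b] _ /=; rewrite EFinM -muleA hi esumZr_ext //.
  all: try move=> ?; repeat apply: mule_ge0; rewrite ?lee_fin ?pos_ge0 //.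
rewrite esum_esum; last by move=> i j _ _; rewrite mule_ge0 // ?lee_fin // mule_ge0 // lee_fin pos_ge0.
rewrite (reindex_esum [set: R * A] _ (fun x => ((x.1, h x.2), x.2))).
  by apply: eq_esum => [[q a]] _ /=; rewrite EFinM muleA.
split.
- by move=> [q a] _ /=.
- by move=> [q1 a1] [q2 a2] _ _ /= [-> _ ->].
- by move=> [[q b] a] [_ /= hab]; exists (q, a) => //=; rewrite hab.
Qed.

End PsiSec.

Section Sem.
Context {R : realType} {Var : finType}.
Local Notation cmd := (@cmd R Var).
Local Notation conf := (@conf R Var).
Local Notation expect := (@expect R Var).
Local Notation store := (@store Var).

Definition phi (c : bool) (f : expect) (g : conf) : \bar R :=
  match g with Active C s => et c C f s | Term s => f s | Bot => 0 end.

Lemma ind_ge0 b : 0 <= (ind b : \bar R).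
Proof. by case: b => /=; rewrite ?lee01. Qed.

Lemma et_ge0 c (C : cmd) (f : expect) : (forall t, 0 <= f t) -> forall s, 0 <= et c C f s.
Proof.
elim: C f => [|r hr||x d|psi ph C1 IH1 C2 IH2|psi ph C1 IH1|C1 IH1 C2 IH2|p hp C1 IH1 C2 IH2|C1 IH1 C2 IH2] f f0 s /=.
- exact: f0.
- by rewrite adde_ge0 // mule_ge0 // ?ind_ge0 // lee_fin ler0q.
- done.
- by apply: esum_ge0 => i _; rewrite mule_ge0 // lee_fin Defs.pmf_ge0.
- by rewrite adde_ge0 // mule_ge0 // ?ind_ge0 // ?IH1 ?IH2.
- rewrite /lfp; apply/ereal_infP => _ [F [F0 _] <-]; exact: F0.
- by rewrite le_max IH1.
- move/andP: hp => [p0 p1].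
  by rewrite adde_ge0 // mule_ge0 // ?lee_fin ?subr_ge0 ?IH1 ?IH2.
- by apply: IH1 => t; apply: IH2.
Qed.

Lemma phi_ge0 c (f : expect) : (forall t, 0 <= f t) -> forall g, 0 <= phi c f g.
Proof. by move=> f0 [C s|s|] /=; rewrite ?et_ge0. Qed.

Lemma et_mono c (C : cmd) (f g : expect) : (forall t, 0 <= f t) -> (forall t, f t <= g t) ->
  forall s, et c C f s <= et c C g s.
Proof.
elim: C f g => [|r hr||x d|psi ph C1 IH1 C2 IH2|psi ph C1 IH1|C1 IH1 C2 IH2|p hp C1 IH1 C2 IH2|C1 IH1 C2 IH2] f g f0 fg s /=.
- exact: fg.
- by apply: leeD.
- done.
- apply: le_esum => i _; apply: lee_wpmul2l; [by rewrite lee_fin Defs.pmf_ge0|exact: fg].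
- by apply: leeD; apply: lee_wpmul2l; rewrite ?ind_ge0 ?IH1 ?IH2.
- rewrite /lfp; apply: le_ereal_inf => _ [F [F0 HF] <-]; exists F => //; split => // t.
  apply: le_trans (HF t); apply: leeD => //; apply: lee_wpmul2l; [exact: ind_ge0|exact: fg].
- by rewrite ge_max !le_max !IH1 ?IH2 ?orbT.
- move/andP: hp => [p0 p1].
  by apply: leeD; apply: lee_wpmul2l; rewrite ?lee_fin ?subr_ge0 ?IH1 ?IH2.
- apply: IH1; first exact: et_ge0.
  by move=> t; apply: IH2.
Qed.

Lemma while_unfold c psi ph (C1 : cmd) (f : expect) : (forall t, 0 <= f t) ->
  forall s, ind (psi s && ph s) * et c C1 (et c (While psi ph C1) f) s
            + ind (psi s && ~~ ph s) * f s <= et c (While psi ph C1) f s.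
Proof.
move=> f0 s; apply/ereal_infP => _ [F [F0 HF] <-].
apply: le_trans (HF s); apply: leeD => //; apply: lee_wpmul2l; first exact: ind_ge0.
apply: et_mono.
- by move=> t; apply: et_ge0.
- by move=> t; apply: ereal_inf_lbound; exists F.
Qed.

Lemma Psi_assign (x : Var) (d : @dexp R Var) (s : store) (g : conf -> \bar R) :
  (forall a, 0 <= g a) ->
  Psi (assign_md x d s) g <=
    \esum_(i in [set: int]) ((Defs.pmf (d s) i)%:E * g (Term (upd s x i))).
Proof.
move=> g0.
pose e := fun i : int => (Defs.pmf (d s) i, @Term R Var (upd s x i)).
pose P := [set i : int | (0 < Defs.pmf (d s) i)%R].
rewrite /Psi (@esum_supp _ _ (e @` P)); last first.
  move=> [q a] hn /=; rewrite /assign_md asboolF ?mul0r ?mul0e //.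
  by move=> [i [di [qe ae]]]; apply: hn; exists i => //; rewrite /e qe ae.
rewrite esum_image; last first.
  move=> i j _ _ [_ H]; have := congr1 (fun t => t x) H.
  by rewrite /upd /= !eqxx.
apply: (le_trans _ (@esum_subset R int P setT (fun i => (Defs.pmf (d s) i)%:E * g (Term (upd s x i))) _ (@subsetT _ P))); last first.
  by move=> i; rewrite mule_ge0 // lee_fin Defs.pmf_ge0.
apply: le_esum => i Pi /=.
rewrite /assign_md asboolT; last by exists i.
by rewrite mul1r pos_gt0.
Qed.

Lemma step_sound c (g : conf) w (mu : @Defs.mdist R conf) : step g w mu ->
  forall f : expect, (forall t, 0 <= f t) -> ind c * w + Psi mu (phi c f) <= phi c f g.
Proof.
elim => {g w mu}.
- move=> s f f0; by rewrite Psi_dirac ?phi_ge0 // mule0 add0e.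
- move=> r hr s f f0; by rewrite Psi_dirac ?phi_ge0.
- move=> s f f0; by rewrite Psi_dirac ?phi_ge0 // mule0 add0e.
- move=> x d s f f0; rewrite mule0 add0e; apply: (le_trans (Psi_assign x d s _ (phi_ge0 c f f0))) => /=; exact: lexx.
- move=> psi ph C D s H f f0; rewrite Psi_dirac ?phi_ge0 // mule0 add0e /=.
  by move/andP: H => [-> ->] /=; rewrite mul1e mul0e adde0.
- move=> psi ph C D s H f f0; rewrite Psi_dirac ?phi_ge0 // mule0 add0e /=.
  by move/andP: H => [-> /negbTE ->] /=; rewrite mul1e mul0e add0e.
- move=> psi ph C D s H f f0; rewrite Psi_dirac ?phi_ge0 // mule0 add0e /=.
  by rewrite (negbTE H) /= !mul0e adde0.
- move=> psi ph C s H f f0; rewrite Psi_dirac ?phi_ge0 // mule0 add0e.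
  apply: (le_trans _ (while_unfold c psi ph C f f0 s)).
  by move/andP: H => [-> ->] /=; rewrite mul1e mul0e adde0.
- move=> psi ph C s H f f0; rewrite Psi_dirac ?phi_ge0 // mule0 add0e.
  apply: (le_trans _ (while_unfold c psi ph C f f0 s)).
  by move/andP: H => [-> /negbTE ->] /=; rewrite mul1e mul0e add0e.
- move=> psi ph C s H f f0; rewrite Psi_dirac ?phi_ge0 // mule0 add0e /=.
  exact: (et_ge0 c (While psi ph C) f f0 s).
- move=> C D s f f0; rewrite Psi_dirac ?phi_ge0 // mule0 add0e /=.
  by rewrite le_max lexx.
- move=> C D s f f0; rewrite Psi_dirac ?phi_ge0 // mule0 add0e /=.
  by rewrite le_max lexx orbT.
- move=> p hp C D s f f0; rewrite mule0 add0e.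
  move/andP: (hp) => [p0 p1].
  rewrite Psi_add; last exact: phi_ge0.
  rewrite (Psi_scale _ (mdirac (Active C s))) //; last exact: phi_ge0.
  rewrite (Psi_scale _ (mdirac (Active D s))) ?subr_ge0 //; last exact: phi_ge0.
  rewrite !Psi_dirac; try exact: phi_ge0.
  exact: lexx.
- move=> C D s w mu nu st IH hi f f0.
  rewrite (Psi_image _ _ _ _ _ _ (phi_ge0 c f f0) hi).
  have -> : (phi c f \o kappa D) = phi c (et c D f) by apply: funext => -[C' s'|s'|].
  exact: (IH _ (et_ge0 c D f f0)).
Qed.

Lemma step_w_ge0 (g : conf) w (mu : @Defs.mdist R conf) : step g w mu -> 0 <= w.
Proof. by elim=> //= r hr s; rewrite lee_fin ler0q. Qed.

Lemma lstep_w_ge0 (mu : @Defs.mdist R conf) w nu : lstep mu w nu -> 0 <= w.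
Proof.
elim => //.
- by move=> g w' mu' /step_w_ge0.
- move=> p mus nus ws mu' nu' p0 _ _ IH _ _.
  by apply: nneseries_ge0 => i _ _; rewrite mule_ge0 ?lee_fin.
Qed.

Lemma lstep_sound c (f : expect) (mu : @Defs.mdist R conf) w nu : (forall t, 0 <= f t) ->
  lstep mu w nu -> ind c * w + Psi nu (phi c f) <= Psi mu (phi c f).
Proof.
move=> f0; elim => {mu w nu}.
- by move=> mu; rewrite mule0 add0e.
- move=> g w mu st; rewrite Psi_dirac ?phi_ge0 //; exact: step_sound.
- move=> p mus nus ws mu nu p0 psum hl IH hu1 hu2.
  rewrite (Psi_union _ _ _ _ _ p0 (phi_ge0 c f f0) hu1) (Psi_union _ _ _ _ _ p0 (phi_ge0 c f f0) hu2).
  have Pg : forall m : @Defs.mdist R conf, 0 <= Psi m (phi c f).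
    by move=> m; apply: Psi_ge0; exact: phi_ge0.
  case: c IH Pg => IH Pg /=.
  + rewrite mul1e -nneseriesD; last 2 first.
    * by move=> i _ _; rewrite mule_ge0 ?lee_fin // (lstep_w_ge0 _ _ _ (hl i)).
    * by move=> i _ _; rewrite mule_ge0 ?lee_fin // Pg.
    apply: lee_nneseries => [i _ _|i _].
    * by rewrite adde_ge0 // mule_ge0 ?lee_fin ?Pg // (lstep_w_ge0 _ _ _ (hl i)).
    * rewrite -ge0_muleDr ?Pg ?(lstep_w_ge0 _ _ _ (hl i)) //.
      apply: lee_wpmul2l; first by rewrite lee_fin.
      by have := IH i; rewrite /= mul1e.
  + rewrite mul0e add0e.
    apply: lee_nneseries => [i _ _|i _].
    * by rewrite mule_ge0 ?lee_fin ?Pg.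
    * apply: lee_wpmul2l; first by rewrite lee_fin.
      by have := IH i; rewrite /= mul0e add0e.
Qed.

Lemma msteps_sound c (f : expect) (mu : @Defs.mdist R conf) w nu : (forall t, 0 <= f t) ->
  msteps mu w nu -> ind c * w + Psi nu (phi c f) <= Psi mu (phi c f).
Proof.
move=> f0; elim => {mu w nu}.
- by move=> mu; rewrite mule0 add0e.
- move=> mu w nu; exact: lstep_sound.
- move=> mu w1 mu' w2 nu _ IH1 _ IH2.
  have -> : ind c * (w1 + w2) = ind c * w1 + ind c * w2.
    by case: (c) => /=; rewrite ?mul1e ?mul0e ?adde0.
  rewrite -addeA; apply: (le_trans _ IH1); exact: leeD.
Qed.

Lemma Expect_restrict c (mu : @Defs.mdist R conf) (f : expect) : (forall t, 0 <= f t) ->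
  Expect (restrictS mu) f <= Psi mu (phi c f).
Proof.
move=> f0; rewrite /Expect /Psi.
apply: (@le_trans _ _ (\esum_(x in [set: R * store])
    (((mu x.1 (Term x.2))%:R * posp x.1)%R%:E * f x.2))).
  apply: le_esum => -[q t] _ /=; rewrite /restrictS; apply: lee_wpmul2r => //.
  by rewrite lee_fin ler_wpM2l // le_pos.
rewrite (_ : \esum_(x in _) _ = \esum_(y in (fun x : R * store => (x.1, @Term R Var x.2)) @` [set: R * store])
   (((mu y.1 y.2)%:R * posp y.1)%R%:E * phi c f y.2)); last first.
  rewrite esum_image //.
  by move=> [q1 t1] [q2 t2] _ _ /= [-> ->].
apply: esum_subset => //; move=> x; apply: Psi_term_ge0; exact: phi_ge0.
Qed.

End Sem.

Theorem mainTheorem6 (R : realType) (Var : finType) (C : @cmd R Var)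
    (s : @store Var) (f : @expect R Var) :
  (forall t, 0 <= f t) ->
  ec C s <= ect C (fun _ => 0) s /\ ev C s f <= evt C f s.
Proof.
move=> f0; split.
- rewrite /ec; apply: ge_ereal_sup => w [mu Hm].
  have f00 : forall t : @store Var, (0 : \bar R) <= (fun _ => 0) t by [].
  have := msteps_sound true (fun _ => 0) _ _ _ f00 Hm.
  rewrite Psi_dirac ?phi_ge0 // /= mul1e => H.
  apply: le_trans H; apply: leeDl; apply: Psi_ge0; exact: phi_ge0.
- rewrite /ev; apply: ge_ereal_sup => _ [mu [w Hm] <-].
  apply: le_trans (Expect_restrict false mu f f0) _.
  have := msteps_sound false f _ _ _ f0 Hm.
  by rewrite Psi_dirac ?phi_ge0 // /= mul0e add0e.
Qed.
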